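(* Let $\mathbf{M}$ be a nonsingular $D\times D$ integer matrix and $\bm{\Gamma}_1,\dots,\bm{\Gamma}_L$ ($L\ge2$) nonsingular $D\times D$ integer matrices that are pairwise commutative and coprime; set $\mathbf{M}_i=\mathbf{M}\bm{\Gamma}_i$. Fix unimodular $\mathbf{U}_1$ and let $\mathbf{m}\in\mathcal{A}_1$ with remainders $\mathbf{r}_i=\langle\mathbf{m}\rangle_{\mathbf{M}_i}$ and folding vectors $\mathbf{n}_i$ (so $\mathbf{m}=\mathbf{M}_i\mathbf{n}_i+\mathbf{r}_i$). Let $\widetilde{\mathbf{r}}_i=\mathbf{r}_i+\triangle\mathbf{r}_i\in\mathbb{Z}^D$ be erroneous remainders, and let $\widetilde{\mathbf{n}}_1,\dots,\widetilde{\mathbf{n}}_L$ be the output of Algorithm 1 applied to $\widetilde{\mathbf{r}}_1,\dots,\widetilde{\mathbf{r}}_L$. Define $\bm{\theta}_i=Q_{\mathbf{M}}(\triangle\mathbf{r}_i-\triangle\mathbf{r}_1)$ for $2\le i\le L$. Then $\widetilde{\mathbf{n}}_i=\mathbf{n}_i$ for all $1\le i\le L$ if and only if $\bm{\theta}_i=\mathbf{0}$ for all $2\le i\le L$. Moreover: (1) if $\lVert\triangle\mathbf{r}_i-\triangle\mathbf{r}_1\rVert<\lambda_{\mathrm{LAT}(\mathbf{M})}/2$ for all $2\le i\le L$, then $\bm{\theta}_i=\mathbf{0}$ for all $i\ge2$; (2) if $\lVert\triangle\mathbf{r}_i\rVert\le\tau$ for all $i$ and $\tau<\lambda_{\mathrm{LAT}(\mathbf{M})}/4$,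 then $\bm{\theta}_i=\mathbf{0}$ for all $i\ge2$. When the folding vectors are correctly determined, $\widetilde{\mathbf{m}}=\frac1L\sum_{i=1}^L(\mathbf{M}_i\mathbf{n}_i+\widetilde{\mathbf{r}}_i)$ satisfies $\lVert\widetilde{\mathbf{m}}-\mathbf{m}\rVert\le\tau$ whenever $\lVert\triangle\mathbf{r}_i\rVert\le\tau$ for all $i$.
   Context: All matrices are $D\times D$; unimodular means integer with determinant $\pm1$; commuting nonsingular integer matrices are coprime if all their common left (equivalently right) divisors are unimodular. $\mathrm{LAT}(\mathbf{M})=\{\mathbf{M}\mathbf{n}:\mathbf{n}\in\mathbb{Z}^D\}$. $\mathcal{N}(\mathbf{A})=\{\mathbf{k}\in\mathbb{Z}^D:\mathbf{k}=\mathbf{A}\mathbf{x},\ \mathbf{x}\in[0,1)^D\}$; $\langle\mathbf{m}\rangle_{\mathbf{A}}$ is the unique $\mathbf{r}\in\mathcal{N}(\mathbf{A})$ with $\mathbf{m}-\mathbf{r}\in\mathrm{LAT}(\mathbf{A})$; $\mathbf{x}\equiv\mathbf{y}\bmod\mathbf{A}$ means $\mathbf{x}-\mathbf{y}\in\mathrm{LAT}(\mathbf{A})$. $\mathcal{A}_1=\{\mathbf{m}\in\mathbb{Z}^D:\lfloor\mathbf{M}_1^{-1}\mathbf{m}\rfloor\in\mathcal{N}(\bm{\Gamma}_2\bm{\Gamma}_3\cdots\bm{\Gamma}_L\mathbf{U}_1)\}$ (componentwise floor). $\lVert\cdot\rVert$ is a fixed norm on $\mathbb{R}^D$; $\lambda_{\mathrm{LAT}(\mathbf{M})}=\min\{\lVert\mathbf{v}\rVert:\mathbf{v}\in\mathrm{LAT}(\mathbf{M})\setminus\{\mathbf{0}\}\}$.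 $Q_{\mathbf{M}}:\mathbb{R}^D\to\mathrm{LAT}(\mathbf{M})$ is a fixed closest-lattice-point map, $Q_{\mathbf{M}}(\mathbf{w})\in\arg\min_{\mathbf{v}\in\mathrm{LAT}(\mathbf{M})}\lVert\mathbf{v}-\mathbf{w}\rVert$, chosen so that $Q_{\mathbf{M}}(\mathbf{w}+\mathbf{l})=Q_{\mathbf{M}}(\mathbf{w})+\mathbf{l}$ for $\mathbf{l}\in\mathrm{LAT}(\mathbf{M})$. Algorithm 1: (i) $\mathbf{v}_i=Q_{\mathbf{M}}(\widetilde{\mathbf{r}}_i-\widetilde{\mathbf{r}}_1)$, $2\le i\le L$; (ii) $\bm{\zeta}_i=\langle\mathbf{M}^{-1}\mathbf{v}_i\rangle_{\bm{\Gamma}_i}$; (iii) $\bm{\chi}_1$ is the unique element of $\mathcal{N}(\bm{\Gamma}_1\bm{\Gamma}_2\cdots\bm{\Gamma}_L\mathbf{U}_1)$ with $\bm{\chi}_1\equiv\mathbf{0}\bmod\bm{\Gamma}_1$ and $\bm{\chi}_1\equiv\bm{\zeta}_i\bmod\bm{\Gamma}_i$ for $2\le i\le L$; (iv) $\widetilde{\mathbf{n}}_1=\bm{\Gamma}_1^{-1}\bm{\chi}_1$ and $\widetilde{\mathbf{n}}_i=\bm{\Gamma}_i^{-1}(\bm{\chi}_1-\mathbf{M}^{-1}\mathbf{v}_i)$ for $2\le i\le L$. *)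

(* Defs.v *)
From HB Require Import structures.
From mathcomp Require Import all_boot all_order all_algebra.
Set Implicit Arguments. Unset Strict Implicit. Unset Printing Implicit Defensive.
Import Order.TTheory GRing.Theory Num.Theory.
Local Open Scope ring_scope.

Definition intm (R : numDomainType) m n (A : 'M[int]_(m, n)) : 'M[R]_(m, n) :=
  map_mx (fun z : int => z%:~R) A.

Definition unimodular D (U : 'M[int]_D) : Prop := \det U = 1 \/ \det U = -1.

Definition ldivides D (X A : 'M[int]_D) : Prop := exists Y : 'M[int]_D, A = X *m Y.

Definition coprime_mx D (A B : 'M[int]_D) : Prop :=
  forall X : 'M[int]_D, ldivides X A -> ldivides X B -> unimodular X.

Definition in_lat D (A : 'M[int]_D) (v : 'cV[int]_D) : Prop :=
  exists n : 'cV[int]_D, v = A *m n.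

Definition congr_mx D (A : 'M[int]_D) (x y : 'cV[int]_D) : Prop := in_lat A (x - y).

Definition in_N D (A : 'M[int]_D) (k : 'cV[int]_D) : Prop :=
  exists x : 'cV[rat]_D, (forall i, 0 <= x i 0 /\ x i 0 < 1) /\
    intm rat k = intm rat A *m x.

(* r = <m>_A : r \in N(A) and m - r \in LAT(A) (r is unique) *)
Definition is_rem D (A : 'M[int]_D) (m r : 'cV[int]_D) : Prop :=
  in_N A r /\ in_lat A (m - r).

Definition floor_vec D (x : 'cV[rat]_D) : 'cV[int]_D := map_mx (@Num.floor rat) x.

(* ordered product Gamma_a Gamma_(a+1) ... Gamma_b *)
Definition prod_mx D (G : nat -> 'M[int]_D) (a b : nat) : 'M[int]_D :=
  foldr (fun i P => G i *m P) 1%:M (iota a (b.+1 - a)).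

Definition in_A1 D L (M : 'M[int]_D) (G : nat -> 'M[int]_D) (U1 : 'M[int]_D)
  (m : 'cV[int]_D) : Prop :=
  in_N (prod_mx G 2 L *m U1)
       (floor_vec (invmx (intm rat (M *m G 1%N)) *m intm rat m)).

Definition is_norm (R : realFieldType) D (nrm : 'cV[R]_D -> R) : Prop :=
  (forall v, 0 <= nrm v) /\ (forall v, nrm v = 0 -> v = 0) /\
  (forall (a : R) v, nrm (a *: v) = `|a| * nrm v) /\
  (forall u v, nrm (u + v) <= nrm u + nrm v).

Definition is_min_dist (R : realFieldType) D (nrm : 'cV[R]_D -> R)
  (M : 'M[int]_D) (lam : R) : Prop :=
  (exists v, in_lat M v /\ v != 0 /\ nrm (intm R v) = lam) /\
  (forall v, in_lat M v -> v != 0 -> lam <= nrm (intm R v)).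

(* Q_M : R^D -> LAT(M) closest lattice point map, translation-equivariant.
   (LAT(M) is a subset of Z^D, so Q_M takes values in integer vectors.) *)
Definition is_closest_map (R : realFieldType) D (nrm : 'cV[R]_D -> R)
  (M : 'M[int]_D) (Q : 'cV[R]_D -> 'cV[int]_D) : Prop :=
  (forall w, in_lat M (Q w)) /\
  (forall w l, in_lat M l -> nrm (intm R (Q w) - w) <= nrm (intm R l - w)) /\
  (forall w l, in_lat M l -> Q (w + intm R l) = Q w + l).

(* tn_1..tn_L is the output of Algorithm 1 on erroneous remainders tr_1..tr_L.
   w i stands for M^{-1} v_i (an integer vector since v_i \in LAT(M)). *)
Definition alg1_output (R : realFieldType) D L (M : 'M[int]_D)
  (G : nat -> 'M[int]_D) (U1 : 'M[int]_D) (Q : 'cV[R]_D -> 'cV[int]_D)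
  (tr tn : nat -> 'cV[int]_D) : Prop :=
  exists (w zeta : nat -> 'cV[int]_D) (chi : 'cV[int]_D),
    (forall i, (2 <= i <= L)%N -> M *m w i = Q (intm R (tr i - tr 1%N))) /\
    (forall i, (2 <= i <= L)%N -> is_rem (G i) (w i) (zeta i)) /\
    in_N (prod_mx G 1 L *m U1) chi /\
    congr_mx (G 1%N) chi 0 /\
    (forall i, (2 <= i <= L)%N -> congr_mx (G i) chi (zeta i)) /\
    G 1%N *m tn 1%N = chi /\
    (forall i, (2 <= i <= L)%N -> G i *m tn i = chi - w i).

(* Main.v *)
Require Import Defs.
From HB Require Import structures.
From mathcomp Require Import all_boot all_order all_algebra.
From mathcomp Require Import zify ring lra.
Import Order.TTheory GRing.Theory Num.Theory.
Local Open Scope ring_scope.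

Lemma intmD (R : numDomainType) m n (A B : 'M[int]_(m,n)) : intm R (A + B) = intm R A + intm R B.
Proof. by rewrite /intm map_mxD. Qed.
Lemma intmN (R : numDomainType) m n (A : 'M[int]_(m,n)) : intm R (- A) = - intm R A.
Proof. by rewrite /intm map_mxN. Qed.
Lemma intmB (R : numDomainType) m n (A B : 'M[int]_(m,n)) : intm R (A - B) = intm R A - intm R B.
Proof. by rewrite intmD intmN. Qed.
Lemma intmM (R : numDomainType) m n p (A : 'M[int]_(m,n)) (B : 'M[int]_(n,p)) : intm R (A *m B) = intm R A *m intm R B.
Proof. by rewrite /intm map_mxM. Qed.
Lemma intm_det (R : numDomainType) n (A : 'M[int]_n) : \det (intm R A) = (\det A)%:~R.
Proof. by rewrite /intm det_map_mx. Qed.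
Lemma intm0 (R : numDomainType) m n : intm R (0 : 'M[int]_(m,n)) = 0.
Proof. by rewrite /intm map_mx0. Qed.

Lemma mx_inj (R : idomainType) n (A : 'M[R]_n) : \det A != 0 ->
  forall p (x y : 'M[R]_(n,p)), A *m x = A *m y -> x = y.
Proof.
move=> dA p x y e; have := congr1 (mulmx (\adj A)) e.
rewrite !mulmxA mul_adj_mx !mul_scalar_mx => /matrixP ee.
apply/matrixP => i j; move: (ee i j); rewrite !mxE; exact: mulfI.
Qed.

Lemma unimod_unit D (U : 'M[int]_D) : unimodular U -> U \in unitmx.
Proof. by rewrite unitmxE; case=> ->; rewrite ?unitr1 ?unitrN1. Qed.

Lemma coprime_bezout D (A B : 'M[int]_D) : coprime_mx A B ->
  exists X Y, A *m X + B *m Y = 1%:M.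
Proof.
move=> hc.
have [P uP [Rm uR [d _ eC]]] := int_Smith_normal_form (row_mx A B).
set S1 : 'M[int]_D := \matrix_(i,j) (d`_i *+ (i == j :> nat)).
have eS : (\matrix_(i, j) (d`_i *+ (i == j :> nat)) : 'M[int]_(D, D + D))
   = S1 *m row_mx 1%:M 0.
  rewrite mul_mx_row mulmx1 mulmx0; apply/matrixP=> i j; rewrite !mxE.
  case: splitP => k ->; rewrite !mxE //.
  by rewrite ltn_eqF ?mulr0n // ltn_addr.
set X0 := P *m S1. set Rt := row_mx 1%:M 0 *m Rm.
have eCX : row_mx A B = X0 *m Rt by rewrite eC eS !mulmxA.
have eA : A = X0 *m lsubmx Rt by rewrite mulmx_lsub -eCX row_mxKl.
have eB : B = X0 *m rsubmx Rt by rewrite mulmx_rsub -eCX row_mxKr.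
have uX : X0 \in unitmx.
  apply: unimod_unit; apply: hc; [exists (lsubmx Rt) | exists (rsubmx Rt)] => //.
set Z := invmx Rm *m col_mx 1%:M (0 : 'M[int]_(D, D)).
have eRZ : Rt *m Z = 1%:M.
  by rewrite /Rt /Z mulmxA -(mulmxA _ Rm) mulmxV // mulmx1 mul_row_col mulmx1 mul0mx addr0.
exists (usubmx (Z *m invmx X0)), (dsubmx (Z *m invmx X0)).
by rewrite -mul_row_col vsubmxK eCX mulmxA -(mulmxA X0) eRZ mulmx1 mulmxV.
Qed.

Lemma coprime_lat D (A B : 'M[int]_D) : \det A != 0 -> A *m B = B *m A ->
  coprime_mx A B -> forall a b : 'cV[int]_D, A *m a = B *m b -> exists c, a = B *m c.
Proof.
move=> dA cAB /coprime_bezout [X [Y eXY]] a b eab.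
set W := block_mx X (-B) Y A.
have eW : block_mx A B 0 1%:M *m W = block_mx 1%:M 0 Y A.
  by rewrite mulmx_block !mul0mx !mul1mx !add0r eXY mulmxN cAB addNr.
have dW : \det W = 1.
  have := congr1 determinant eW.
  rewrite det_mulmx det_ublock det_lblock det1 mulr1 mul1r => h.
  by apply: (mulfI dA); rewrite h mulr1.
have uW : W \in unitmx by rewrite unitmxE dW unitr1.
set z := col_mx a (-b).
have hz : row_mx A B *m z = 0 by rewrite mul_row_col eab mulmxN subrr.
set u := invmx W *m z.
have ezu : z = W *m u by rewrite /u mulmxA mulmxV // mul1mx.
have hRW : row_mx A B *m W = row_mx 1%:M 0.
  by rewrite mul_row_block eXY mulmxN cAB addNr.
have hu1 : usubmx u = 0.
  have := hz; rewrite ezu mulmxA hRW -[u]vsubmxK mul_row_col mul1mx mul0mx addr0.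
  by rewrite vsubmxK.
exists (- dsubmx u).
have : z = W *m col_mx 0 (dsubmx u) by rewrite -hu1 vsubmxK.
rewrite mul_block_col !mulmx0 !add0r => /eq_col_mx [-> _].
by rewrite mulNmx mulmxN.
Qed.

Lemma prod_mxS D (G : nat -> 'M[int]_D) k L : (k <= L)%N ->
  prod_mx G k L = G k *m prod_mx G k.+1 L.
Proof.
move=> kL; rewrite /prod_mx subSS.
have -> : (L.+1 - k = (L - k).+1)%N by rewrite subSn.
by [].
Qed.

Lemma prod_mx_end D (G : nat -> 'M[int]_D) L : prod_mx G L.+1 L = 1%:M.
Proof. by rewrite /prod_mx subnn. Qed.

Lemma det_prod_mx D (G : nat -> 'M[int]_D) L k :
  (forall i, (k <= i <= L)%N -> \det (G i) != 0) -> (k <= L.+1)%N ->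
  \det (prod_mx G k L) != 0.
Proof.
move=> hG; move e: (L.+1 - k)%N => j; elim: j k e hG => [|j IH] k e hG hk.
  have -> : k = L.+1 by lia.
  by rewrite prod_mx_end det1 oner_neq0.
rewrite prod_mxS; last by lia.
rewrite det_mulmx mulf_neq0 //; first by apply: hG; lia.
apply: IH; [lia | | lia] => i hi; apply: hG; lia.
Qed.

Lemma crt D L (G : nat -> 'M[int]_D)
  (hG : forall i, (1 <= i <= L)%N -> \det (G i) != 0)
  (hcomm : forall i j, (1 <= i <= L)%N -> (1 <= j <= L)%N -> G i *m G j = G j *m G i)
  (hcop : forall i j, (1 <= i <= L)%N -> (1 <= j <= L)%N -> i != j ->
            coprime_mx (G i) (G j)) :
  forall k, (1 <= k)%N -> (k <= L.+1)%N -> forall d,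
  (forall i, (k <= i <= L)%N -> in_lat (G i) d) -> in_lat (prod_mx G k L) d.
Proof.
move=> k; move e: (L.+1 - k)%N => j; elim: j k e => [|j IH] k e k1 kL d hd.
  have -> : k = L.+1 by lia.
  by exists d; rewrite prod_mx_end mul1mx.
have kL' : (k <= L)%N by lia.
have [a ea] := hd k (ltac:(lia)).
have ha : forall i, (k.+1 <= i <= L)%N -> in_lat (G i) a.
  move=> i hi; have [b eb] := hd i (ltac:(lia)).
  have eab : G k *m a = G i *m b by rewrite -ea.
  apply: (@coprime_lat _ _ _ _ _ _ _ _ eab).
  - by apply: hG; lia.
  - by apply: hcomm; lia.
  - by apply: hcop; lia.
have [c ec] := IH k.+1 (ltac:(lia)) (ltac:(lia)) (ltac:(lia)) a ha.
by exists c; rewrite prod_mxS // ea ec mulmxA.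
Qed.

Lemma N_uniq D (P : 'M[int]_D) : \det P != 0 -> forall x y,
  in_N P x -> in_N P y -> in_lat P (x - y) -> x = y.
Proof.
move=> dP x y [u [hu eu]] [v [hv ev]] [k ek].
have dPq : \det (intm rat P) != 0 by rewrite intm_det intr_eq0.
have ek' : intm rat k = u - v.
  apply: (@mx_inj _ _ _ dPq); rewrite -intmM -ek intmB eu ev.
  by rewrite mulmxBr.
have k0 : k = 0.
  apply/matrixP => i j; rewrite (ord1 j) mxE.
  move/matrixP/(_ i 0): ek'; rewrite !mxE => h.
  have [hu1 hu2] := hu i; have [hv1 hv2] := hv i.
  have h1 : k i 0 < 1 by rewrite -(ltr_int rat) h rmorph1; lra.
  have h2 : -1 < k i 0 by rewrite -(ltr_int rat) h rmorphN1; lra.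
  lia.
by apply/eqP; rewrite -subr_eq0 ek k0 mulmx0.
Qed.

Section Norm.
Variables (R : realFieldType) (D : nat) (nrm : 'cV[R]_D -> R).
Hypothesis hnrm : is_norm nrm.

Lemma nrm0 : nrm 0 = 0.
Proof.
case: hnrm => _ [_ [hs _]].
by rewrite -(scale0r (0 : 'cV[R]_D)) hs normr0 mul0r.
Qed.

Lemma nrmN v : nrm (- v) = nrm v.
Proof.
case: hnrm => _ [_ [hs _]].
by rewrite -scaleN1r hs normrN1 mul1r.
Qed.

Lemma nrmD u v : nrm (u + v) <= nrm u + nrm v.
Proof. by case: hnrm => _ [_ [_ ht]]. Qed.

Lemma nrmB u v : nrm (u - v) <= nrm u + nrm v.
Proof. by rewrite -(nrmN v) nrmD. Qed.

Lemma nrm_sum (I : Type) (r : seq I) (P : pred I) (F : I -> 'cV[R]_D) :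
  nrm (\sum_(i <- r | P i) F i) <= \sum_(i <- r | P i) nrm (F i).
Proof.
apply: (big_ind2 (fun v x => nrm v <= x)); first by rewrite nrm0.
  move=> x1 x2 y1 y2 h1 h2; apply: le_trans (nrmD _ _) _; exact: lerD.
by [].
Qed.
End Norm.
Arguments nrm0 {R D nrm} hnrm.
Arguments nrmN {R D nrm} hnrm v.
Arguments nrmD {R D nrm} hnrm u v.
Arguments nrmB {R D nrm} hnrm u v.
Arguments nrm_sum {R D nrm} hnrm {I} r P F.

Lemma Q_small (R : realFieldType) D (nrm : 'cV[R]_D -> R) (M : 'M[int]_D) Q lam :
  is_norm nrm -> is_closest_map nrm M Q -> is_min_dist nrm M lam ->
  forall w, nrm w < lam / 2 -> Q w = 0.
Proof.
move=> hn [hQ1 [hQ2 _]] [_ hl] w hw.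
case: (Q w =P 0) => // /eqP hne.
have h1 := hl _ (hQ1 w) hne.
have h0 : in_lat M 0 by exists 0; rewrite mulmx0.
have h2 := hQ2 w 0 h0; rewrite intm0 sub0r (nrmN hn) in h2.
have h3 : nrm (intm R (Q w)) <= nrm (intm R (Q w) - w) + nrm w.
  by rewrite -{1}(subrK w (intm R (Q w))) (nrmD hn).
exfalso; lra.
Qed.

Lemma id1 D (tr1 tri r1 ri X Y : 'cV[int]_D) (m : 'cV[int]_D) :
  tri - tr1 = (tri - (m - Y) - (tr1 - (m - X))) + (X - Y).
Proof. apply/matrixP => a b; rewrite !mxE; ring. Qed.
Lemma id2 D (a b c d e : 'cV[int]_D) : a - b + (c - d - c) = a - b - d.
Proof. apply/matrixP => i j; rewrite !mxE; ring. Qed.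
Lemma zid D (a b c d : 'cV[int]_D) : a - b = (a - c) - (d - c) + (d - b).
Proof. apply/matrixP => i j; rewrite !mxE; ring. Qed.
Lemma id3 D (A t r m : 'cV[int]_D) : m = A + r -> A + t = m + (t - r).
Proof. move=> ->; apply/matrixP => i j; rewrite !mxE; ring. Qed.

Theorem theorem3 (R : realFieldType) (D L : nat) (hL : (2 <= L)%N)
  (M : 'M[int]_D) (G : nat -> 'M[int]_D) (U1 : 'M[int]_D)
  (hM : \det M != 0)
  (hG : forall i, (1 <= i <= L)%N -> \det (G i) != 0)
  (hcomm : forall i j, (1 <= i <= L)%N -> (1 <= j <= L)%N -> G i *m G j = G j *m G i)
  (hcop : forall i j, (1 <= i <= L)%N -> (1 <= j <= L)%N -> i != j ->
            coprime_mx (G i) (G j))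
  (hU1 : unimodular U1)
  (m : 'cV[int]_D) (hm : in_A1 L M G U1 m)
  (r n : nat -> 'cV[int]_D)
  (hr : forall i, (1 <= i <= L)%N -> is_rem (M *m G i) m (r i))
  (hn : forall i, (1 <= i <= L)%N -> m = (M *m G i) *m n i + r i)
  (tr tn : nat -> 'cV[int]_D)
  (nrm : 'cV[R]_D -> R) (hnrm : is_norm nrm)
  (Q : 'cV[R]_D -> 'cV[int]_D) (hQ : is_closest_map nrm M Q)
  (lam : R) (hlam : is_min_dist nrm M lam)
  (halg : alg1_output L M G U1 Q tr tn) :
  let dr := fun i => tr i - r i in
  let theta := fun i => Q (intm R (dr i - dr 1%N)) in
  ((forall i, (1 <= i <= L)%N -> tn i = n i) <->
   (forall i, (2 <= i <= L)%N -> theta i = 0)) /\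
  ((forall i, (2 <= i <= L)%N -> nrm (intm R (dr i - dr 1%N)) < lam / 2) ->
   forall i, (2 <= i <= L)%N -> theta i = 0) /\
  (forall tau : R, (forall i, (1 <= i <= L)%N -> nrm (intm R (dr i)) <= tau) ->
   tau < lam / 4 -> forall i, (2 <= i <= L)%N -> theta i = 0) /\
  (forall tau : R, (forall i, (1 <= i <= L)%N -> nrm (intm R (dr i)) <= tau) ->
   let tm := (L%:R)^-1 *: \sum_(1 <= i < L.+1) intm R ((M *m G i) *m n i + tr i) in
   nrm (tm - intm R m) <= tau).
Proof.
move=> dr theta.
have L1 : (1 <= L)%N by lia.
have erm : forall i, (1 <= i <= L)%N -> r i = m - M *m G i *m n i.
  by move=> i hi; rewrite [in RHS](hn i hi) addrC addKr.
have eQ : forall i, (2 <= i <= L)%N -> Q (intm R (tr i - tr 1%N)) =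
    theta i + M *m (G 1%N *m n 1%N - G i *m n i).
  move=> i hi.
  have hl : in_lat M (M *m (G 1%N *m n 1%N - G i *m n i)).
    by exists (G 1%N *m n 1%N - G i *m n i).
  have -> : tr i - tr 1%N = (dr i - dr 1%N) + M *m (G 1%N *m n 1%N - G i *m n i).
    rewrite /dr (erm i) ?(erm 1%N); try lia.
    by rewrite mulmxBr !mulmxA; apply: id1.
  case: hQ => _ [_ hQ3].
  by rewrite intmD hQ3.
case: halg => [w [zeta [chi [hw [hz [hchi [hc1 [hci [ht1 hti]]]]]]]]].
have ew : forall i, (2 <= i <= L)%N ->
    M *m w i = theta i + M *m (G 1%N *m n 1%N - G i *m n i).
  by move=> i hi; rewrite hw // eQ.
split.
  split.
  - move=> H i hi.
    have e1 : chi = G 1%N *m n 1%N by rewrite -ht1 H //; lia.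
    have ei : G i *m n i = chi - w i by rewrite -H ?hti //; lia.
    have ewi : w i = G 1%N *m n 1%N - G i *m n i.
      by rewrite ei e1 opprB addrC subrK.
    have h := ew i hi; rewrite -ewi in h.
    by apply: (addIr (M *m w i)); rewrite add0r -h.
  - move=> H.
    have ew' : forall i, (2 <= i <= L)%N -> w i = G 1%N *m n 1%N - G i *m n i.
      by move=> i hi; apply: (@mx_inj _ _ M hM); rewrite ew // H // add0r.
    set P' := prod_mx G 1 L *m U1.
    have dP : \det P' != 0.
      rewrite det_mulmx mulf_neq0 //.
        by apply: det_prod_mx => // j hj; apply: hG; lia.
      by case: hU1 => ->; rewrite ?oppr_eq0 oner_neq0.
    have hN : in_N P' (G 1%N *m n 1%N).
      case: (hr 1%N ltac:(lia)) => [[x [hx ex]] _].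
      have uM1 : intm rat (M *m G 1%N) \in unitmx.
        by rewrite unitmxE unitfE intm_det intr_eq0 det_mulmx mulf_neq0 // hG.
      have ef : floor_vec (invmx (intm rat (M *m G 1%N)) *m intm rat m) = n 1%N.
        rewrite {1}(hn 1%N ltac:(lia)) intmD (intmM _ _ _ _ (M *m G 1%N) (n 1%N)) ex -mulmxDr mulKmx //.
        apply/matrixP => a b; rewrite !mxE (ord1 b).
        have [hx1 hx2] := hx a.
        apply: floor_def; rewrite rmorphD rmorph1 /=.
        apply/andP; split; lra.
      rewrite /in_A1 ef in hm.
      case: hm => y [hy ey]; exists y; split => //.
      rewrite intmM ey /P' (@prod_mxS _ G 1%N L L1) -mulmxA (intmM _ _ _ _ (G 1%N)).
      by rewrite mulmxA.
    have hlat : in_lat P' (chi - G 1%N *m n 1%N).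
      have hd : forall i, (1 <= i <= L)%N -> in_lat (G i) (chi - G 1%N *m n 1%N).
        move=> i hi; have [->|i1] := eqVneq i 1%N.
          case: hc1 => c0 ec0; exists (c0 - n 1%N).
          by rewrite mulmxBr -ec0 subr0.
        have hi2 : (2 <= i <= L)%N by lia.
        case: (hci i hi2) => a ea; case: (hz i hi2) => _ [b eb].
        exists (a - b - n i).
        rewrite (zid _ chi (G 1%N *m n 1%N) (zeta i) (w i)) ea eb (ew' i hi2).
        by rewrite !mulmxBr id2.
      have [c ec] := @crt _ _ _ hG hcomm hcop 1%N isT ltac:(lia) _ hd.
      exists (invmx U1 *m c).
      by rewrite ec /P' -mulmxA mulKVmx // unimod_unit.
    have echi : chi = G 1%N *m n 1%N := @N_uniq _ _ dP _ _ hchi hN hlat.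
    move=> i hi; have [->|i1] := eqVneq i 1%N.
      by apply: (@mx_inj _ _ (G 1%N) (hG 1%N ltac:(lia))); rewrite ht1 echi.
    have hi2 : (2 <= i <= L)%N by lia.
    apply: (@mx_inj _ _ (G i) (hG i ltac:(lia))).
    by rewrite hti // echi ew' // opprB addrC subrK.
split.
  by move=> H i hi; apply: (@Q_small _ _ _ _ _ _ hnrm hQ hlam); apply: H.
split.
  move=> tau Ht htau i hi; apply: (@Q_small _ _ _ _ _ _ hnrm hQ hlam).
  rewrite intmB; have := nrmB hnrm (intm R (dr i)) (intm R (dr 1%N)).
  have := Ht i ltac:(lia); have := Ht 1%N ltac:(lia); lra.
move=> tau Ht; cbv zeta.
have -> : \sum_(1 <= i < L.+1) intm R ((M *m G i) *m n i + tr i) =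
    \sum_(1 <= i < L.+1) (intm R m + intm R (dr i)).
  apply: eq_big_nat => i hi; rewrite -intmD; congr intm.
  by rewrite /dr; apply: id3; apply: hn.
rewrite big_split sumr_const_nat subSS subn0 -scaler_nat scalerDr scalerA.
rewrite mulVf ?pnatr_eq0 -?lt0n // scale1r addrAC subrr add0r.
have hS : nrm (\sum_(1 <= i < L.+1) intm R (dr i)) <= tau *+ L.
  apply: le_trans (nrm_sum hnrm _ _ _) _.
  have -> : tau *+ L = \sum_(1 <= i < L.+1) tau by rewrite sumr_const_nat subSS subn0.
  by apply: ler_sum_nat => i hi; apply: Ht.
case: hnrm => _ [_ [hsc _]].
rewrite hsc ger0_norm ?invr_ge0 ?ler0n //.
rewrite -mulr_natl in hS.
have hL0 : (0 : R) < L%:R by rewrite ltr0n; lia.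
have hi : L%:R^-1 * L%:R = 1 :> R by rewrite mulVf // gt_eqF.
have hi0 : (0 : R) < L%:R^-1 by rewrite invr_gt0.
by apply: le_trans (ler_wpM2l (ltW hi0) hS) _; rewrite mulrA hi mul1r.
Qed.
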